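(* Fix $\alpha_1<1$. Let $\mathcal U^{\mathrm{item}}_{\mathrm{lex}}=\{u\in\mathcal U:\forall u'\in\mathcal U,\ u_{\mathcal I}\ge_{\mathrm{lex}}u'_{\mathcal I}\}$ and let $u^*\in\arg\max_{u\in\mathcal U^{\mathrm{item}}_{\mathrm{lex}}}\sum_{i\in\mathcal N}\psi(u_i,\alpha_1)$, where we assume this maximum is $>-\infty$. Then for every $\eta>\max(1,\max_{j\in\mathcal I}u^*_j)$ and every $u\in\mathcal U$ there exists $\alpha_0<0$ such that for all $\alpha\le\alpha_0$, $$W_{(1-\eta^\alpha,\alpha_1,\alpha)}(u^* )\ge W_{(1-\eta^\alpha,\alpha_1,\alpha)}(u).$$
   Context: Setup: users $\mathcal N=\{1,\dots,|\mathcal N|\}$, items $\mathcal I=\{|\mathcal N|+1,\dots,n\}$, $n=|\mathcal N|+|\mathcal I|$; exposure weights $v\in\mathbb R^{|\mathcal I|}$ with $v_1\ge\dots\ge v_{|\mathcal I|}\ge0$; values $\mu_{ij}\ge0$ for $i,j\in[n]$. A ranking tensor is $P=(P_{ijk})_{i,j\in[n],k\in[|\mathcal I|]}$ with $P_{ijk}=0$ unless $i\in\mathcal N,j\in\mathcal I$, and each $P_i=(P_{ijk})_{j\in\mathcal I,k}$ doubly stochastic; $\mathcal P$ is the set of ranking tensors; $P_{ij}v=\sum_kP_{ijk}v_k$; $u_i(P)=\sum_{j=1}^n\mu_{ij}(P_{ij}+P_{ji})v$; $\mathcal U=\{(u_i(P))_{i\in[n]}:P\in\mathcal P\}$; $u_{\mathcal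 N}=(u_i)_{i\in\mathcal N}$, $u_{\mathcal I}=(u_j)_{j\in\mathcal I}$. Leximin order: for $x\in\mathbb R^m$ with increasingly sorted entries $x_{(1)}\le\dots\le x_{(m)}$, let $\bar x_k=\sum_{l\le k}x_{(l)}$. $x>_{\mathrm{lex}}y$ iff there is $k$ with $\bar x_l=\bar y_l$ for all $l<k$ and $\bar x_k>\bar y_k$; $x\ge_{\mathrm{lex}}y$ iff not $y>_{\mathrm{lex}}x$. Welfare: $\psi(x,\alpha)=x^\alpha$ ($\alpha>0$), $\log x$ ($\alpha=0$), $-x^\alpha$ ($\alpha<0$), with $\psi(0,\alpha)=-\infty$ for $\alpha\le0$; for $\theta=(\lambda,\alpha_1,\alpha_2)$, $W_\theta(u)=(1-\lambda)\sum_{i\in\mathcal N}\psi(u_i,\alpha_1)+\lambda\sum_{j\in\mathcal I}\psi(u_j,\alpha_2)$. *)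

(* Defs.v *)
From HB Require Import structures.
From mathcomp Require Import all_boot all_order all_algebra.
From mathcomp Require Import all_classical all_reals all_analysis.
Set Implicit Arguments. Unset Strict Implicit. Unset Printing Implicit Defensive.
Import Order.TTheory GRing.Theory Num.Theory.
Local Open Scope ring_scope.

Section Defs.
Variable R : realType.

(* agents: users 'I_nN (inl) and items 'I_nI (inr); [n] = N ⊎ I *)
Definition agent (nN nI : nat) : finType := ('I_nN + 'I_nI)%type.

(* A ranking tensor restricted to its (possibly) nonzero block:
   P i j k for user i, item j, position k. *)
Definition is_ranking (nN nI : nat) (P : 'I_nN -> 'I_nI -> 'I_nI -> R) : Prop :=
  forall i : 'I_nN,
    (forall j k, 0 <= P i j k) /\
    (forall j, \sum_(k < nI) P i j k = 1) /\
    (forall k, \sum_(j < nI) P i j k = 1).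

Definition Pfull nN nI (P : 'I_nN -> 'I_nI -> 'I_nI -> R)
  (i j : agent nN nI) (k : 'I_nI) : R :=
  match i, j with inl a, inr b => P a b k | _, _ => 0 end.

Definition Pv nN nI (v : 'I_nI -> R) P (i j : agent nN nI) : R :=
  \sum_(k < nI) Pfull P i j k * v k.

Definition util nN nI (v : 'I_nI -> R) (mu : agent nN nI -> agent nN nI -> R)
  P (i : agent nN nI) : R :=
  \sum_(j : agent nN nI) mu i j * (Pv v P i j + Pv v P j i).

Definition inU nN nI v mu (u : agent nN nI -> R) : Prop :=
  exists P, is_ranking P /\ forall i, u i = util v mu P i.

Definition sorted_vals m (x : 'I_m -> R) : seq R :=
  sort <=%R [seq x i | i <- enum 'I_m].
Definition prefix_sum m (x : 'I_m -> R) (k : nat) : R :=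
  \sum_(l < k) nth 0 (sorted_vals x) l.
Definition lex_gt m (x y : 'I_m -> R) : Prop :=
  exists k, (1 <= k <= m)%N /\
    (forall l, (1 <= l < k)%N -> prefix_sum x l = prefix_sum y l) /\
    prefix_sum y k < prefix_sum x k.
Definition lex_ge m (x y : 'I_m -> R) : Prop := ~ lex_gt y x.

Definition items_part nN nI (u : agent nN nI -> R) : 'I_nI -> R :=
  fun j => u (inr j).

Definition inUlex nN nI v mu (u : agent nN nI -> R) : Prop :=
  inU v mu u /\ forall u', inU v mu u' -> lex_ge (items_part u) (items_part u').

Definition psi (x a : R) : \bar R :=
  if 0 < a then (x `^ a)%:E
  else if x == 0 then -oo%E
  else if a == 0 then (ln x)%:E
  else (- x `^ a)%:E.

Definition user_welfare nN nI (a1 : R) (u : agent nN nI -> R) : \bar R :=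
  (\sum_(i < nN) psi (u (inl i)) a1)%E.

Definition item_welfare nN nI (a2 : R) (u : agent nN nI -> R) : \bar R :=
  (\sum_(j < nI) psi (u (inr j)) a2)%E.

Definition W nN nI (lam a1 a2 : R) (u : agent nN nI -> R) : \bar R :=
  ((1 - lam)%:E * user_welfare a1 u + lam%:E * item_welfare a2 u)%E.

End Defs.

(* Main.v *)
Require Import Defs.
From HB Require Import structures.
From mathcomp Require Import all_boot all_order all_algebra.
From mathcomp Require Import all_classical all_reals all_analysis.
From mathcomp Require Import zify ring lra.
Import Order.TTheory GRing.Theory Num.Theory.
Local Open Scope ring_scope.
Section Helpers.
Context {R : realType}.

Lemma size_sv m (x : 'I_m -> R) : size (sorted_vals x) = m.
Proof. by rewrite /sorted_vals size_sort size_map size_enum_ord. Qed.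

Lemma sv_sorted m (x : 'I_m -> R) : sorted <=%R (sorted_vals x).
Proof. apply: sort_sorted => a b; exact: le_total. Qed.

Lemma sv_mem m (x : 'I_m -> R) t : t \in sorted_vals x -> exists j, t = x j.
Proof. by rewrite /sorted_vals mem_sort => /mapP [j _ ->]; exists j. Qed.

Lemma sv_nth_mem m (x : 'I_m -> R) l : (l < m)%N -> exists j, nth 0 (sorted_vals x) l = x j.
Proof. by move=> lm; apply: sv_mem; apply: mem_nth; rewrite size_sv. Qed.

Lemma sv_mono m (x : 'I_m -> R) l l' : (l <= l')%N -> (l' < m)%N ->
  nth 0 (sorted_vals x) l <= nth 0 (sorted_vals x) l'.
Proof.
move=> ll' l'm; apply: (sorted_leq_nth le_trans lexx); rewrite ?sv_sorted // ?inE ?size_sv //.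
exact: leq_ltn_trans ll' l'm.
Qed.

Lemma sv_big (V : Type) (idx : V) (op : Monoid.com_law idx) m (x : 'I_m -> R) (F : R -> V) :
  \big[op/idx]_(j < m) F (x j) = \big[op/idx]_(t <- sorted_vals x) F t.
Proof.
rewrite /sorted_vals (perm_big _ (permEl (perm_sort _ _))) big_map big_enum.
by apply: eq_bigl => j; rewrite inE.
Qed.

Lemma sv_big_nth (V : Type) (idx : V) (op : Monoid.com_law idx) m (x : 'I_m -> R) (F : R -> V) :
  \big[op/idx]_(j < m) F (x j) = \big[op/idx]_(l < m) F (nth 0 (sorted_vals x) l).
Proof. by rewrite sv_big (big_nth 0) size_sv big_mkord. Qed.

Lemma prefix_sumS m (x : 'I_m -> R) l :
  prefix_sum x l.+1 = prefix_sum x l + nth 0 (sorted_vals x) l.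
Proof. by rewrite /prefix_sum big_ord_recr. Qed.

Lemma prefix_sum0 m (x : 'I_m -> R) : prefix_sum x 0 = 0.
Proof. by rewrite /prefix_sum big_ord0. Qed.

Lemma lex_gt_index m (x y : 'I_m -> R) : lex_gt x y ->
  exists i, (i < m)%N /\
    (forall l, (l < i)%N -> nth 0 (sorted_vals x) l = nth 0 (sorted_vals y) l) /\
    nth 0 (sorted_vals y) i < nth 0 (sorted_vals x) i.
Proof.
move=> [k [/andP [k1 km] [he hlt]]].
have pe : forall l, (l < k)%N -> prefix_sum x l = prefix_sum y l.
  move=> l lk; case: l lk => [|l] lk; first by rewrite !prefix_sum0.
  by apply: he.
exists k.-1; split; first by case: k k1 km {he hlt pe} => [|k] //.
split.
  move=> l lk.
  have h1 := pe l.+1; have h2 := pe l.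
  rewrite !prefix_sumS in h1.
  have e2 : prefix_sum x l = prefix_sum y l by apply: h2; lia.
  have e1 : prefix_sum x l + nth 0 (sorted_vals x) l = prefix_sum y l + nth 0 (sorted_vals y) l
    by apply: h1; lia.
  by move: e1; rewrite e2 => /addrI.
have e2 : prefix_sum x k.-1 = prefix_sum y k.-1 by apply: pe; lia.
move: hlt; case: k k1 km he pe e2 => [|k] //= _ _ _ _ e2.
by rewrite !prefix_sumS e2 ltrD2l.
Qed.

Lemma lex_eq m (x y : 'I_m -> R) : ~ lex_gt x y -> ~ lex_gt y x ->
  sorted_vals x = sorted_vals y.
Proof.
move=> nxy nyx.
have pe : forall k, (k <= m)%N -> forall l, (l <= k)%N -> prefix_sum x l = prefix_sum y l.
  elim=> [|k IH] km l lk.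
    by move: lk; rewrite leqn0 => /eqP ->; rewrite !prefix_sum0.
  have IH' := IH (ltnW km).
  rewrite leq_eqVlt in lk; case/orP: lk => [/eqP ->|lk]; last by apply: IH'.
  case: (ltgtP (prefix_sum x k.+1) (prefix_sum y k.+1)) => // hc; exfalso.
  - apply: nyx; exists k.+1; split; first by apply/andP.
    by split=> // l' /andP [_ l'k]; rewrite IH'.
  - apply: nxy; exists k.+1; split; first by apply/andP.
    by split=> // l' /andP [_ l'k]; rewrite IH'.
apply: (@eq_from_nth _ 0); first by rewrite !size_sv.
move=> l; rewrite size_sv => lm.
have h1 := pe m (leqnn m) l.+1 lm.
have h2 := pe m (leqnn m) l (ltnW lm).
by move: h1; rewrite !prefix_sumS h2 => /addrI.
Qed.

Lemma powR_pos (x a : R) : 0 < x -> x `^ a = expR (a * ln x).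
Proof. by move=> x0; rewrite /powR gt_eqF. Qed.

Lemma powR_ratio (p q a K : R) : 0 < p -> p < q -> a <= 0 ->
  K <= (- a) * (ln q - ln p) -> K * q `^ a <= p `^ a.
Proof.
move=> p0 pq a0 hK.
have q0 : 0 < q by apply: lt_trans pq.
rewrite !powR_pos //.
have -> : a * ln p = a * ln q + (- a) * (ln q - ln p) by ring.
rewrite expRD mulrC ler_wpM2l ?expR_ge0 //.
apply: le_trans (expR_ge1Dx _); lra.
Qed.

Lemma powR_anti (p q a : R) : 0 < p -> p <= q -> a <= 0 -> q `^ a <= p `^ a.
Proof.
move=> p0 pq a0; have q0 : 0 < q by apply: lt_le_trans pq.
rewrite !powR_pos // ler_expR ler_wnM2l //.
by rewrite ler_ln ?posrE.
Qed.


Lemma psi_npinf (x a : R) : psi x a != +oo%E.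
Proof. by rewrite /psi; repeat case: ifP. Qed.

Lemma sum_npinf (I : Type) (s : seq I) (F : I -> \bar R) :
  (forall i, F i != +oo%E) -> (\sum_(i <- s) F i != +oo)%E.
Proof.
move=> hF; apply: (big_ind (fun z : \bar R => z != +oo%E)) => //.
by move=> [p| |] [q| |].
Qed.

Lemma psi_neg (x a : R) : x != 0 -> a < 0 -> psi x a = (- x `^ a)%:E.
Proof.
move=> x0 a0; rewrite /psi ltNge (ltW a0) /= (negbTE x0).
by rewrite (lt_eqF a0).
Qed.

Lemma psi0 (a : R) : a < 0 -> psi 0 a = -oo%E.
Proof. by move=> a0; rewrite /psi ltNge (ltW a0) /= eqxx. Qed.

Lemma powR_lt1 (eta a : R) : 1 < eta -> a < 0 -> eta `^ a < 1.
Proof.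
move=> he a0; rewrite powR_pos; last by apply: lt_trans he.
rewrite expR_lt1; have := ln_gt0 he; nra.
Qed.

Lemma W_ninf nN nI (lam a1 a2 : R) (u : agent nN nI -> R) :
  0 < lam -> 0 < 1 - lam ->
  (item_welfare a2 u = -oo%E \/ user_welfare a1 u = -oo%E) ->
  W lam a1 a2 u = -oo%E.
Proof.
move=> l0 l1 [] h; rewrite /W h.
  by rewrite gt0_muleNy ?lte_fin // addeNy.
by rewrite gt0_muleNy ?lte_fin // addNye.
Qed.


Lemma sv_all m (x : 'I_m -> R) :
  (forall l, (l < m)%N -> 0 < nth 0 (sorted_vals x) l) -> forall j, 0 < x j.
Proof.
move=> h j.
have hj : x j \in sorted_vals x by rewrite /sorted_vals mem_sort map_f ?mem_enum.
rewrite -(nth_index 0 hj); apply: h.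
have := index_mem (x j) (sorted_vals x); rewrite hj size_sv; exact.
Qed.

Lemma IW_real nN nI (u : agent nN nI -> R) (a : R) : a < 0 ->
  (forall j, u (inr j) != 0) ->
  item_welfare a u = (- \sum_(l < nI) (nth 0 (sorted_vals (items_part u)) l) `^ a)%:E.
Proof.
move=> a0 hnz; rewrite /item_welfare (sv_big_nth _ _ _ _ (items_part u) (fun t => psi t a)).
rewrite -sumrN -sumEFin; apply: eq_bigr => l _; apply: psi_neg => //.
have [j ->] := sv_nth_mem _ (items_part u) _ (ltn_ord l).
exact: hnz.
Qed.

Lemma xpos m (x y : 'I_m -> R) i : (i < m)%N ->
  (forall l, (l < i)%N -> nth 0 (sorted_vals x) l = nth 0 (sorted_vals y) l) ->
  nth 0 (sorted_vals y) i < nth 0 (sorted_vals x) i ->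
  (forall l, (l < m)%N -> 0 < nth 0 (sorted_vals y) l) ->
  forall l, (l < m)%N -> 0 < nth 0 (sorted_vals x) l.
Proof.
move=> im heq hlt hy l lm.
case: (ltnP l i) => li; first by rewrite heq //; apply: hy.
apply: lt_le_trans (sv_mono _ x _ _ li lm).
exact: lt_trans (hy _ im) hlt.
Qed.

Lemma sum_gap m (x y : 'I_m -> R) i a : (i < m)%N -> a < 0 ->
  (forall l, (l < i)%N -> nth 0 (sorted_vals x) l = nth 0 (sorted_vals y) l) ->
  nth 0 (sorted_vals y) i < nth 0 (sorted_vals x) i ->
  (forall l, (l < m)%N -> 0 < nth 0 (sorted_vals y) l) ->
  (nth 0 (sorted_vals y) i) `^ a - m%:R * (nth 0 (sorted_vals x) i) `^ a <=
  \sum_(l < m) (nth 0 (sorted_vals y) l) `^ a - \sum_(l < m) (nth 0 (sorted_vals x) l) `^ a.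
Proof.
move=> im a0 heq hlt hy.
have hx := xpos _ _ _ _ im heq hlt hy.
set d := (nth 0 (sorted_vals x) i) `^ a.
have key : (nth 0 (sorted_vals y) i) `^ a <=
  \sum_(l < m) ((nth 0 (sorted_vals y) l) `^ a - (nth 0 (sorted_vals x) l) `^ a + d).
  rewrite (bigD1 (Ordinal im)) //= -/d.
  rewrite subrK lerDl; apply: sumr_ge0 => l _.
  case: (ltnP l i) => li.
    by rewrite heq // subrr add0r powR_ge0.
  have hd : (nth 0 (sorted_vals x) l) `^ a <= d.
    apply: powR_anti; [exact: hx | exact: sv_mono | exact: ltW].
  have := powR_ge0 (nth 0 (sorted_vals y) l) a; lra.
move: key; rewrite big_split /= sumrB sumr_const card_ord -mulr_natl.
lra.
Qed.

End Helpers.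

Lemma util_ge0 (R : realType) nN nI (v : 'I_nI -> R) (mu : agent nN nI -> agent nN nI -> R)
  (hv0 : forall k, 0 <= v k) (hmu : forall i j, 0 <= mu i j) u :
  inU v mu u -> forall i, 0 <= u i.
Proof.
move=> [P [hP hu]] i; rewrite hu /util.
apply: sumr_ge0 => j _; apply: mulr_ge0 => //.
have hPv : forall a b, 0 <= Pv v P a b.
  move=> a b; rewrite /Pv; apply: sumr_ge0 => k _; apply: mulr_ge0 => //.
  by case: a => [a|a]; case: b => [b|b] //=; case: (hP a) => h _; apply: h.
by apply: addr_ge0.
Qed.

Theorem mainTheorem10 (R : realType) (nN nI : nat)
  (v : 'I_nI -> R) (mu : agent nN nI -> agent nN nI -> R)
  (hv0 : forall k, 0 <= v k)
  (hvdec : forall k l : 'I_nI, (k <= l)%N -> v l <= v k)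
  (hmu : forall i j, 0 <= mu i j)
  (a1 : R) (ha1 : a1 < 1)
  (ustar : agent nN nI -> R)
  (hustar : inUlex v mu ustar)
  (hmax : forall u, inUlex v mu u -> (user_welfare a1 u <= user_welfare a1 ustar)%E)
  (hfin : (-oo < user_welfare a1 ustar)%E) :
  forall eta : R, 1 < eta -> (forall j : 'I_nI, ustar (inr j) < eta) ->
  forall u, inU v mu u ->
  exists a0 : R, a0 < 0 /\
    forall a : R, a <= a0 ->
      (W (1 - eta `^ a) a1 a u <= W (1 - eta `^ a) a1 a ustar)%E.
Proof.
move=> eta heta hlt u hu.
have hge : ~ lex_gt (items_part u) (items_part ustar) := hustar.2 u hu.
have lam0 : forall a, a < 0 -> 0 < 1 - eta `^ a.
  by move=> a a0; have := @powR_lt1 R eta a heta a0; lra.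
have lam1 : forall a : R, 0 <= 1 - (1 - eta `^ a).
  by move=> a; have := powR_ge0 eta a; lra.
case: (pselect (lex_gt (items_part ustar) (items_part u))) => H; last first.
  have Heq := lex_eq _ _ _ H hge.
  have hIW : forall a, item_welfare a u = item_welfare a ustar.
    move=> a; rewrite /item_welfare.
    rewrite (sv_big _ _ _ _ (items_part u) (fun t => psi t a)).
    by rewrite (sv_big _ _ _ _ (items_part ustar) (fun t => psi t a)) Heq.
  have hUW : (user_welfare a1 u <= user_welfare a1 ustar)%E.
    apply: hmax; split => // u' hu'.
    have := hustar.2 u' hu'.
    by rewrite /lex_ge /lex_gt /prefix_sum Heq.
  exists (-1); split; first lra.
  move=> a _; rewrite /W hIW; apply: leeD2r; apply: lee_wpmul2l => //.
  by rewrite lee_fin.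
have [i [im [heqs hci]]] := lex_gt_index _ _ _ H.
have u0 := util_ge0 _ _ _ _ _ hv0 hmu _ hu.
have us0 := util_ge0 _ _ _ _ _ hv0 hmu _ hustar.1.
have lamp : forall a, 0 < 1 - (1 - eta `^ a).
  move=> a; rewrite opprB addrC subrK powR_pos ?expR_gt0 //; lra.
case: (pselect (exists j, u (inr j) = 0)) => [[j hj]|hnz].
  exists (-1); split; first lra.
  move=> a ha; have a0 : a < 0 by lra.
  rewrite (W_ninf _ _ _ _ _ _ (lam0 a a0) (lamp a)) ?leNye //.
  by left; rewrite /item_welfare (bigD1 j) //= hj psi0 // addNye.
have hnz' : forall j, u (inr j) != 0 by move=> j; apply/eqP => h; apply: hnz; exists j.
have ypos : forall l, (l < nI)%N -> 0 < nth 0 (sorted_vals (items_part u)) l.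
  move=> l lm; have [j ->] := sv_nth_mem _ (items_part u) _ lm.
  by rewrite /items_part lt_def hnz' u0.
have xp := xpos _ _ _ _ im heqs hci ypos.
have uspos := sv_all _ _ xp.
have hnzs : forall j, ustar (inr j) != 0 by move=> j; have := uspos j; rewrite /items_part lt_def => /andP [].
have hsn : forall (I : Type) (s : seq I) (F : I -> \bar R), (forall i, F i != +oo%E) -> (\sum_(i <- s) F i)%E = +oo%E -> False.
  by move=> I s F hF he; move: (sum_npinf _ s _ hF); rewrite he.
case E: (user_welfare a1 u) => [r| |]; last 2 first.
- exfalso; move: E; rewrite /user_welfare; apply: hsn => k; exact: psi_npinf.
- exists (-1); split; first lra.
  move=> a ha; have a0 : a < 0 by lra.
  by rewrite (W_ninf _ _ _ _ _ _ (lam0 a a0) (lamp a)) ?leNye //; right.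
case Es: (user_welfare a1 ustar) => [rs| |]; last 2 first.
- exfalso; move: Es; rewrite /user_welfare; apply: hsn => k; exact: psi_npinf.
- by move: hfin; rewrite Es.
set c := nth 0 (sorted_vals (items_part u)) i.
set d := nth 0 (sorted_vals (items_part ustar)) i.
have c0 : 0 < c by apply: ypos.
have cd : c < d by [].
have d0 : 0 < d by apply: lt_trans cd.
have deta : d < eta.
  by have [j hj] := sv_nth_mem _ (items_part ustar) _ im; rewrite /d hj; apply: hlt.
have Ldc : 0 < ln d - ln c by rewrite subr_gt0 ltr_ln ?posrE.
have Lec : 0 < ln eta - ln c by rewrite subr_gt0 ltr_ln ?posrE //; apply: lt_trans deta.
have Le : 0 < ln eta by apply: ln_gt0.
set D := `|r - rs|.
set M : R := nI%:R.
have D0 : 0 <= D by rewrite /D normr_ge0.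
have M0 : 0 <= M by rewrite /M ler0n.
have t1 : 0 <= 2 * M / (ln d - ln c) by apply: divr_ge0 => //; lra.
have t2 : 0 <= 4 * D / (ln eta - ln c) by apply: divr_ge0 => //; lra.
have t3 : 0 <= 2 / ln eta by apply: divr_ge0 => //; lra.
exists (- (2 * M / (ln d - ln c) + 4 * D / (ln eta - ln c) + 2 / ln eta + 1)).
split; first lra.
move=> a ha; have a0 : a < 0 by lra.
have F1 : (2 * M) * d `^ a <= c `^ a.
  apply: powR_ratio => //; first exact: ltW.
  by rewrite -ler_pdivrMr //; lra.
have F2 : (4 * D) * eta `^ a <= c `^ a.
  apply: powR_ratio => //; first exact: lt_trans deta; first exact: ltW.
  by rewrite -ler_pdivrMr //; lra.
have F3 : 2 * eta `^ a <= 1.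
  have := @powR_ratio R 1 eta a 2 ltr01 heta (ltW a0).
  rewrite ln1 subr0 powR1 => h; apply: h.
  by rewrite -ler_pdivrMr //; lra.
have F4 := sum_gap _ _ _ _ _ im a0 heqs hci ypos.
rewrite /W E Es (IW_real _ _ _ _ a0 hnz') (IW_real _ _ _ _ a0 hnzs) -!EFinM -!EFinD lee_fin.
move: F4; rewrite -/c -/d.
set Sy := \sum_(l < nI) _.
set Sx := \sum_(l < nI) _.
move=> F4.
set E0 := eta `^ a in F2 F3 *; set C := c `^ a in F1 F2 F4 *; set Dd := d `^ a in F1 F4 *.
rewrite -/M in F4.
have E0p : 0 <= E0 by apply: powR_ge0.
have Ddp : 0 <= Dd by apply: powR_ge0.
have Cp : 0 <= C by apply: powR_ge0.
have hD : r - rs <= D by apply: ler_norm.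
have h1 : C / 2 <= Sy - Sx by lra.
have h2 : (1 - E0) * (C / 2) <= (1 - E0) * (Sy - Sx) by apply: ler_wpM2l => //; lra.
have h3 : C / 4 <= (1 - E0) * (C / 2) by nra.
have h4 : E0 * (r - rs) <= E0 * D by apply: ler_wpM2l.
have h5 : E0 * D <= C / 4 by nra.
have -> : 1 - (1 - E0) = E0 by ring.
nra.
Qed.
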